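(* Under the degree-corrected stochastic block model $DCSBM(n,P,\Theta,Z)$ with regularizer $\tau\ge0$, let $\tilde\lambda_1,\dots,\tilde\lambda_K$ be the $K$ nonzero eigenvalues of $\tilde F$ (in descending order of magnitude) and $\tilde a_1,\dots,\tilde a_K$ associated unit-norm right eigenvectors. Then: 1) $\tilde\Gamma\tilde F=N^{\mathscr L_\tau}\tilde\Gamma$; 2) the $K$ nonzero eigenvalues of $N^{\mathscr L_\tau}$ are $\tilde\lambda_1,\dots,\tilde\lambda_K$, with associated unit-norm right eigenvectors $$\tilde\eta_k=\sum_{i=1}^K\big[\tilde a_k(i)/\|\tilde\theta^{(i)}\|\big]\,\tilde\theta^{(i)},\qquad k=1,\dots,K.$$
   Context: $n$ nodes, each in exactly one of $K$ nonempty communities, $g_i$ the community of node $i$; $Z\in\{0,1\}^{n\times K}$ with $Z_{ik}=1$ iff $g_i=k$. $P$ is a $K\times K$ symmetric, nonnegative, nonsingular, irreducible matrix; $\theta\in\mathbb{R}^n$ has positive entries, $\Theta=\mathrm{diag}(\theta)$, $\Omega=\Theta ZPZ'\Theta$. Let $\mathscr D$ be the diagonal matrix with $\mathscr D_{ii}=\sum_{j=1}^n\Omega_{ij}$, $\mathscr D_\tau=\mathscr D+\tau I$, and $\mathscr L_\tau=\mathscr D_\tau^{-1/2}\Omega\mathscr D_\tau^{-1/2}$. For a matrix $Y$ with columns $Y_1,\dots,Y_t$, its column-normalized matrix $N^Y$ has $i$-th column $Y_i/\|Y_i\|$ (Euclidean norm); $N^{\mathscr L_\tau}$ is this for $\mathscr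 L_\tau$. Let $\theta_i^\tau=\theta_i\mathscr D_{ii}/(\mathscr D_{ii}+\tau)$, $\tilde\theta\in\mathbb{R}^n$ with $\tilde\theta_i=\sqrt{\theta_i^\tau}$, and for $1\le k\le K$ let $\tilde\theta^{(k)}(i)=\tilde\theta_i$ if $g_i=k$ and $0$ otherwise. Let $\tilde\Gamma$ be the $n\times K$ matrix with $k$-th column $\tilde\theta^{(k)}/\|\tilde\theta^{(k)}\|$, and $\tilde F=\tilde\Gamma'N^{\mathscr L_\tau}\tilde\Gamma$ ($K\times K$). *)

(* Defs.v *)
From mathcomp Require Import all_boot all_order all_algebra.
Set Implicit Arguments. Unset Strict Implicit. Unset Printing Implicit Defensive.
Import Order.TTheory GRing.Theory Num.Theory.
Local Open Scope ring_scope.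

Section DCSBM.
Variable R : rcfType.

Definition vnorm m (v : 'cV[R]_m) : R := Num.sqrt (\sum_i (v i 0) ^+ 2).

Definition colnorm m t (Y : 'M[R]_(m, t)) : 'M[R]_(m, t) :=
  \matrix_(i, j) (Y i j / vnorm (col j Y)).

Definition Zmat n K (g : 'I_n -> 'I_K) : 'M[R]_(n, K) :=
  \matrix_(i, k) (if g i == k then 1 else 0).

Definition Thetamat n (theta : 'I_n -> R) : 'M[R]_n := diag_mx (\row_i theta i).

Definition Omega n K (theta : 'I_n -> R) (g : 'I_n -> 'I_K) (P : 'M[R]_K)
  : 'M[R]_n :=
  Thetamat theta *m Zmat g *m P *m (Zmat g)^T *m Thetamat theta.

Definition degD n (Om : 'M[R]_n) (i : 'I_n) : R := \sum_j Om i j.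

Definition Dtau_isqrt n (tau : R) (Om : 'M[R]_n) : 'M[R]_n :=
  diag_mx (\row_i (Num.sqrt (degD Om i + tau))^-1).

Definition Ltau n (tau : R) (Om : 'M[R]_n) : 'M[R]_n :=
  Dtau_isqrt tau Om *m Om *m Dtau_isqrt tau Om.

Definition theta_tau n (tau : R) (theta : 'I_n -> R) (Om : 'M[R]_n) (i : 'I_n) : R :=
  theta i * degD Om i / (degD Om i + tau).

Definition theta_tilde n (tau : R) (theta : 'I_n -> R) (Om : 'M[R]_n) : 'cV[R]_n :=
  \col_i Num.sqrt (theta_tau tau theta Om i).

Definition theta_tilde_k n K (tau : R) (theta : 'I_n -> R) (Om : 'M[R]_n)
  (g : 'I_n -> 'I_K) (k : 'I_K) : 'cV[R]_n :=
  \col_i (if g i == k then theta_tilde tau theta Om i 0 else 0).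

Definition Gamma_tilde n K (tau : R) (theta : 'I_n -> R) (Om : 'M[R]_n)
  (g : 'I_n -> 'I_K) : 'M[R]_(n, K) :=
  \matrix_(i, k) (theta_tilde_k tau theta Om g k i 0
                   / vnorm (theta_tilde_k tau theta Om g k)).

Definition F_tilde n K (tau : R) (theta : 'I_n -> R) (Om : 'M[R]_n)
  (g : 'I_n -> 'I_K) : 'M[R]_K :=
  (Gamma_tilde tau theta Om g)^T *m colnorm (Ltau tau Om) *m Gamma_tilde tau theta Om g.

Definition irreducible_mx K (P : 'M[R]_K) : Prop :=
  forall i j : 'I_K, exists m : nat, 0 < (P ^+ m.+1) i j.

End DCSBM.

(* Main.v *)
Require Import Defs.
From mathcomp Require Import all_boot all_order all_algebra.
From mathcomp Require Import ring.
Import Order.TTheory GRing.Theory Num.Theory.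
Local Open Scope ring_scope.

Lemma sum_sel (R : pzSemiRingType) K (f : 'I_K -> R) (k : 'I_K) :
  \sum_l f l * (if k == l then 1 else 0) = f k.
Proof.
rewrite (bigD1 k) //= eqxx mulr1 big1 ?addr0 // => l nlk.
by rewrite eq_sym (negbTE nlk) mulr0.
Qed.

Lemma sum_sel' (R : pzSemiRingType) K (f : 'I_K -> R) (k : 'I_K) :
  \sum_l (if k == l then 1 else 0) * f l = f k.
Proof.
rewrite (bigD1 k) //= eqxx mul1r big1 ?addr0 // => l nlk.
by rewrite eq_sym (negbTE nlk) mul0r.
Qed.

Lemma sumsq (R : pzRingType) m (v : 'cV[R]_m) :
  \sum_i v i 0 ^+ 2 = (v^T *m v) 0 0.
Proof. by rewrite mxE; apply: eq_bigr => i _; rewrite mxE expr2. Qed.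
Lemma sylvester_cp (R : idomainType) n K (U : 'M[R]_(n, K)) (W : 'M[R]_(K, n)) :
  (K <= n)%N -> char_poly (U *m W) = 'X^(n - K) * char_poly (W *m U).
Proof.
move=> leKn.
set x : {poly R} := 'X.
set U' := map_mx polyC U; set W' := map_mx polyC W.
have cUW : char_poly (U *m W) = \det (x%:M - U' *m W').
  by rewrite /char_poly /char_poly_mx map_mxM.
have cWU : char_poly (W *m U) = \det (x%:M - W' *m U').
  by rewrite /char_poly /char_poly_mx map_mxM.
pose A := block_mx (x%:M : 'M_n) U' W' (1%:M : 'M_K).
pose L1 := block_mx (1%:M : 'M_n) (- U') 0 (1%:M : 'M_K).
pose L2 := block_mx (1%:M : 'M_n) 0 (- W') (x%:M : 'M_K).
have e1 : L1 *m A = block_mx (x%:M - U' *m W') 0 W' 1%:M.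
  rewrite mulmx_block !mul1mx !mul0mx !add0r mulmx1 mulNmx addrN.
  by [].
have e2 : L2 *m A = block_mx (x%:M) U' 0 (x%:M - W' *m U').
  rewrite mulmx_block !mul1mx !mul0mx !addr0 mulmx1 mulNmx.
  rewrite mul_mx_scalar mul_scalar_mx addNr.
  by congr (block_mx _ _ _ _); rewrite ?mulNmx addrC.
have d1 := congr1 determinant e1.
have d2 := congr1 determinant e2.
rewrite det_mulmx /L1 det_ublock det_lblock !det1 mul1r mulr1 mul1r in d1.
rewrite det_mulmx /L2 det_lblock det_ublock det1 mul1r !det_scalar in d2.
rewrite d1 -cUW -cWU in d2.
apply: (@mulfI _ (x ^+ K)); first by rewrite expf_neq0 // polyX_eq0.
rewrite d2 mulrA -exprD subnKC //.
Qed.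
Theorem lemma5 (R : rcfType) (n K : nat) (g : 'I_n -> 'I_K) (P : 'M[R]_K)
  (theta : 'I_n -> R) (tau : R)
  (lambda : 'I_K -> R) (a : 'I_K -> 'cV[R]_K) :
  (forall k : 'I_K, exists i : 'I_n, g i = k) ->
  P^T = P ->
  (forall k l, 0 <= P k l) ->
  P \in unitmx ->
  irreducible_mx P ->
  (forall i, 0 < theta i) ->
  0 <= tau ->
  let Om := Omega theta g P in
  let F := F_tilde tau theta Om g in
  let N := colnorm (Ltau tau Om) in
  let G := Gamma_tilde tau theta Om g in
  char_poly F = \prod_(k < K) ('X - (lambda k)%:P) ->
  (forall k, lambda k != 0) ->
  (forall k l : 'I_K, (k <= l)%N -> `|lambda l| <= `|lambda k|) ->
  (forall k, F *m a k = lambda k *: a k) ->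
  (forall k, vnorm (a k) = 1) ->
  G *m F = N *m G /\
  char_poly N = 'X^(n - K) * \prod_(k < K) ('X - (lambda k)%:P) /\
  (forall k : 'I_K,
     let eta := \sum_(i < K) (a k i 0 / vnorm (theta_tilde_k tau theta Om g i))
                               *: theta_tilde_k tau theta Om g i in
     N *m eta = lambda k *: eta /\ vnorm eta = 1).
Proof.
move=> gsurj Psym Pge0 Punit _ thpos taupos Om F N G cpF _ _ Fa na.
have OmE i j : Om i j = theta i * theta j * P (g i) (g j).
  rewrite /Om /Omega /Thetamat mul_mx_diag !mxE.
  under eq_bigr => l _ do rewrite !mxE.
  rewrite sum_sel.
  under eq_bigr => l _ do rewrite mul_diag_mx !mxE -mulrA.
  by rewrite -mulr_sumr sum_sel' mulrAC.
have PT k l : P k l = P l k by rewrite -{1}Psym mxE.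
have Prow k : exists l, 0 < P k l.
  have: [exists l, P k l != 0].
    case: (boolP [exists l, P k l != 0]) => // /existsPn H.
    have := mulmxV Punit; move/matrixP/(_ k k); rewrite !mxE eqxx big1.
      by move/eqP; rewrite eq_sym oner_eq0.
    by move=> l _; move: (H l); rewrite negbK => /eqP ->; rewrite mul0r.
  by case/existsP => l Hl; exists l; rewrite lt_def Hl Pge0.
pose s k := \sum_j theta j * P k (g j).
have s_pos k : 0 < s k.
  have [l Pkl] := Prow k; have [i gi] := gsurj l.
  rewrite /s (bigD1 i) //= ltr_wpDr //.
    by apply: sumr_ge0 => j _; rewrite mulr_ge0 // ltW.
  by rewrite gi mulr_gt0.
have DE i : degD Om i = theta i * s (g i).
  rewrite /degD /s mulr_sumr; apply: eq_bigr => j _.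
  by rewrite OmE mulrA.
have D_pos i : 0 < degD Om i by rewrite DE mulr_gt0.
have Dt_pos i : 0 < degD Om i + tau by rewrite ltr_wpDr.
pose h i := theta i / Num.sqrt (degD Om i + tau).
have h_pos i : 0 < h i by rewrite divr_gt0 // sqrtr_gt0.
have LE i j : Ltau tau Om i j = h i * h j * P (g i) (g j).
  rewrite /Ltau /Dtau_isqrt mul_mx_diag mxE mul_diag_mx mxE OmE !mxE /h.
  ring.
pose c k := Num.sqrt (\sum_i (h i * P (g i) k) ^+ 2).
have c_pos k : 0 < c k.
  have [l Plk] := Prow k; have [i gi] := gsurj l.
  rewrite sqrtr_gt0 (bigD1 i) //= ltr_wpDr //.
    by apply: sumr_ge0 => j _; rewrite sqr_ge0.
  by rewrite exprn_gt0 // mulr_gt0 // gi PT.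
have colE j : vnorm (col j (Ltau tau Om)) = h j * c (g j).
  rewrite /vnorm /c.
  under eq_bigr => i _ do rewrite mxE LE.
  have -> : \sum_i (h i * h j * P (g i) (g j)) ^+ 2
            = h j ^+ 2 * \sum_i (h i * P (g i) (g j)) ^+ 2.
    by rewrite mulr_sumr; apply: eq_bigr => i _; ring.
  by rewrite sqrtrM ?sqr_ge0 // sqrtr_sqr gtr0_norm.
have NE i j : N i j = h i * P (g i) (g j) / c (g j).
  rewrite /N /colnorm mxE LE colE.
  have := h_pos j; have := c_pos (g j).
  by move=> /lt0r_neq0 c0 /lt0r_neq0 h0; field; rewrite c0 h0.
pose tt i := theta_tilde tau theta Om i 0.
have ttE i : tt i = h i * Num.sqrt (s (g i)).
  rewrite /tt /theta_tilde mxE /theta_tau /h.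
  have -> : theta i * degD Om i / (degD Om i + tau)
          = theta i ^+ 2 * (s (g i) * (degD Om i + tau)^-1).
    by rewrite DE; ring.
  rewrite sqrtrM ?sqr_ge0 // sqrtr_sqr gtr0_norm // sqrtrM ?ltW //.
  rewrite sqrtrV ?ltW //; ring.
have tt_pos i : 0 < tt i by rewrite ttE mulr_gt0 // sqrtr_gt0.
pose M l k := P l k / Num.sqrt (s l) / c k.
have NE' i j : N i j = tt i * M (g i) (g j).
  rewrite NE ttE /M.
  have : Num.sqrt (s (g i)) != 0 by rewrite lt0r_neq0 // sqrtr_gt0.
  by move=> s0; field; rewrite s0 lt0r_neq0.
pose nrm k := vnorm (theta_tilde_k tau theta Om g k).
have ttkE k i : theta_tilde_k tau theta Om g k i 0 = if g i == k then tt i else 0.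
  by rewrite mxE.
have nrm2 k : nrm k ^+ 2 = \sum_i (theta_tilde_k tau theta Om g k i 0) ^+ 2.
  by rewrite sqr_sqrtr // sumr_ge0 // => i _; rewrite sqr_ge0.
have nrm_pos k : 0 < nrm k.
  have [i gi] := gsurj k.
  rewrite /nrm /vnorm sqrtr_gt0 (bigD1 i) //= ltr_wpDr //.
    by apply: sumr_ge0 => j _; rewrite sqr_ge0.
  by rewrite ttkE gi eqxx exprn_gt0.
have GE i k : G i k = theta_tilde_k tau theta Om g k i 0 / nrm k by rewrite mxE.
pose W := \matrix_(l, j) (nrm l * M l (g j)) : 'M[R]_(K, n).
have NGW : N = G *m W.
  apply/matrixP => i j; rewrite NE' !mxE.
  rewrite (bigD1 (g i)) //= big1 ?addr0.
    rewrite GE ttkE eqxx mxE.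
    by have := nrm_pos (g i) => /lt0r_neq0 n0; field.
  move=> l nl; rewrite GE ttkE.
  by rewrite eq_sym (negbTE nl) mul0r mul0r.
have GTG : G^T *m G = 1%:M.
  apply/matrixP => k l; rewrite !mxE.
  under eq_bigr => i _ do rewrite mxE !GE.
  case: (eqVneq k l) => [<-|nkl].
    have -> : \sum_i theta_tilde_k tau theta Om g k i 0 / nrm k *
         (theta_tilde_k tau theta Om g k i 0 / nrm k)
       = (\sum_i (theta_tilde_k tau theta Om g k i 0) ^+ 2) / nrm k ^+ 2.
      by rewrite mulr_suml; apply: eq_bigr => i _; rewrite !expr2 invfM; ring.
    by rewrite -nrm2 divff // expf_neq0 // lt0r_neq0.
  rewrite big1 // => i _; rewrite !ttkE.
  case: eqP => [gik|]; case: eqP => [gil|]; rewrite ?mul0r ?mulr0 //.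
  by move: nkl; rewrite -gik -gil eqxx.
have FE : F = W *m G.
  by rewrite /F /F_tilde -/N -/G NGW mulmxA GTG mul1mx.
have Kn : (K <= n)%N.
  have : (#|[set: 'I_K]| <= #|[set g i | i in 'I_n]|)%N.
    apply: subset_leq_card; apply/subsetP => k _.
    by have [i <-] := gsurj k; apply: imset_f.
  by move/leq_trans/(_ (leq_imset_card _ _)); rewrite cardsT !card_ord.
split; first by rewrite FE mulmxA -NGW.
split; first by rewrite NGW sylvester_cp // -FE cpF.
move=> k eta.
have etaE : eta = G *m a k.
  apply/matrixP => i j; rewrite ord1 /eta summxE !mxE.
  apply: eq_bigr => l _; rewrite mxE GE; ring.
split.
  by rewrite etaE NGW -mulmxA (mulmxA W) -FE Fa scalemxAr.
rewrite etaE /vnorm sumsq trmx_mul -mulmxA (mulmxA G^T) GTG mul1mx -sumsq.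
exact: na.
Qed.
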